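(* Let $(x_k)_{k\ge1}$ be a sequence of non-negative reals and let $M$ be the strongest-first counting function defined in the context. Then: (1) for every fixed $t\ge1$, the map $s\mapsto M(t,(x_k)_{k=1}^t,s)$ is non-decreasing on $[0,\infty)$; (2) for every fixed $s\ge0$ and all integers $1\le t_1\le t_2$, the map $t\mapsto M(t,(x_k)_{k=1}^t,s)$ is cap-unimodal on $\{t_1,\dots,t_2\}$; in particular $\min_{t_1\le t\le t_2}M(t,(x_k)_{k=1}^t,s)=\min\{M(t_1,(x_k)_{k=1}^{t_1},s),M(t_2,(x_k)_{k=1}^{t_2},s)\}$; (3) for every fixed $s\ge0$ and all integers $1\le t_1\le t_2$, $\max_{t_1\le t\le t_2}M(t,(x_k)_{k=1}^t,s)\le t_2-t_1+M(t_1,(x_k)_{k=1}^{t_1},s)$.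
   Context: For $t\ge1$ and $(x_k)_{k=1}^t\in[0,\infty)^t$ let $x_{1,t}\le x_{2,t}\le\dots\le x_{t,t}$ be the increasing rearrangement (order statistics). The strongest-first counting function is $M(0,\varnothing,s)=0$ and, for $t\ge1$, $M(t,(x_k)_{k=1}^t,s)=0$ if $x_{t,t}>s$, and otherwise $M(t,(x_k)_{k=1}^t,s)=\max\{1\le k\le t:\sum_{j=t-k+1}^{t}x_{j,t}\le s\}$ (the maximal number of largest values which, starting with the biggest, can be summed without exceeding $s$). A function $h$ on an integer interval $\{t_1,\dots,t_2\}$ is called cap-unimodal if it is either monotone, or there is $t^*$ in the interval such that $h$ is non-decreasing on $\{t_1,\dots,t^*\}$ and non-increasing on $\{t^*,\dots,t_2\}$. *)

(* Defs.v *)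
(* the statement is purely order-theoretic, so it is stated
   for an arbitrary real field R (which includes the real numbers). *)
From HB Require Import structures.
From mathcomp Require Import all_boot all_order all_algebra.
Set Implicit Arguments. Unset Strict Implicit. Unset Printing Implicit Defensive.
Import Order.TTheory GRing.Theory Num.Theory.
Local Open Scope ring_scope.

(* Increasing rearrangement of (x_1, ..., x_t):
   nth 0 (ostat t x) (j-1) is the order statistic x_{j,t}, 1 <= j <= t. *)
Definition ostat {R : realFieldType} (t : nat) (x : nat -> R) : seq R :=
  sort <=%R [seq x k | k <- iota 1 t].

(* Strongest-first counting function M(t, (x_k)_{k=1}^t, s).
   The sum over j = t-k+1 .. t of x_{j,t} is the sum over 0-based indices
   t-k <= j < t of the sorted list. *)
Definition Mcount {R : realFieldType} (t : nat) (x : nat -> R) (s : R) : nat :=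
  if t == 0%N then 0%N
  else if s < nth 0 (ostat t x) t.-1 then 0%N
  else \max_(1 <= k < t.+1 | \sum_(t - k <= j < t) nth 0 (ostat t x) j <= s) k.

Definition cap_unimodal (h : nat -> nat) (t1 t2 : nat) : Prop :=
  (forall a b, (t1 <= a)%N -> (a <= b)%N -> (b <= t2)%N -> (h a <= h b)%N)
  \/ (forall a b, (t1 <= a)%N -> (a <= b)%N -> (b <= t2)%N -> (h b <= h a)%N)
  \/ (exists2 ts, (t1 <= ts <= t2)%N &
        (forall a b, (t1 <= a)%N -> (a <= b)%N -> (b <= ts)%N -> (h a <= h b)%N) /\
        (forall a b, (ts <= a)%N -> (a <= b)%N -> (b <= t2)%N -> (h b <= h a)%N)).

(* Main.v *)
Require Import Defs.
From HB Require Import structures.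
From mathcomp Require Import all_boot all_order all_algebra.
From mathcomp Require Import zify.
Import Order.TTheory GRing.Theory Num.Theory.
Lemma chain_up (h : nat -> nat) lo hi :
  (forall t, lo <= t -> t < hi -> h t <= h t.+1) ->
  forall a b, lo <= a -> a <= b -> b <= hi -> h a <= h b.
Proof.
move=> H a b ha; elim: b => [|b IH] hab hb.
  by move: hab; rewrite leqn0 => /eqP ->.
move: hab; rewrite leq_eqVlt ltnS => /orP [/eqP -> //| hab].
apply: leq_trans (IH hab (ltnW hb)) _; apply: H => //.
exact: leq_trans hab.
Qed.

Lemma chain_down (h : nat -> nat) lo hi :
  (forall t, lo <= t -> t < hi -> h t.+1 <= h t) ->
  forall a b, lo <= a -> a <= b -> b <= hi -> h b <= h a.
Proof.
move=> H a b ha; elim: b => [|b IH] hab hb.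
  by move: hab; rewrite leqn0 => /eqP ->.
move: hab; rewrite leq_eqVlt ltnS => /orP [/eqP -> //| hab].
apply: leq_trans (IH hab (ltnW hb)); apply: H => //.
exact: leq_trans hab.
Qed.

Section NatPart.
End NatPart.

Lemma find_ts (h : nat -> nat) t1
  (Hi : forall t, t1 <= t -> h t.+1 <= (h t).+1)
  (Hii : forall t, t1 <= t -> h t < t -> h t.+1 <= h t)
  (Hiii : forall t, t1 <= t -> h t <= t) :
  forall t2, t1 <= t2 -> exists ts, [/\ t1 <= ts <= t2,
    (forall t, t1 <= t -> t < ts -> h t <= h t.+1) &
    (forall t, ts <= t -> t < t2 -> h t.+1 <= h t)].
Proof.
elim=> [|t2 IH] h12.
  exists t1; split; first by rewrite leqnn h12.
  - by move=> t a b; rewrite ltnNge a in b.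
  - by move=> t a b; rewrite ltn0 in b.
move: h12; rewrite leq_eqVlt => /orP [/eqP e|]; rewrite ?ltnS.
  exists t1; split; first by rewrite e !leqnn.
  - by move=> t a b; rewrite ltnNge a in b.
  - by move=> t a b; rewrite -e ltnNge a in b.
move=> h12; have [ts [/andP [h1 h2] HA HB]] := IH h12.
case: (leqP (h t2.+1) (h t2)) => hst.
  exists ts; split; first by rewrite h1 (leq_trans h2).
  - exact: HA.
  - move=> t a b; move: b; rewrite ltnS leq_eqVlt => /orP [/eqP -> //|b].
    exact: HB.
have ht2 : h t2 = t2.
  apply/eqP; rewrite eqn_leq Hiii //=; rewrite leqNgt; apply/negP => lt.
  by have := Hii _ h12 lt; rewrite leqNgt hst.
have ets : ts = t2.
  apply/eqP; rewrite eqn_leq h2 /= leqNgt; apply/negP => lt.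
  have := @chain_down h _ _ HB _ _ (leqnn ts) h2 (leqnn t2).
  have := Hiii _ h1; rewrite ht2 => a b; have := leq_trans b a.
  by rewrite leqNgt lt.
exists t2.+1; split; first by rewrite leqnn andbT (leq_trans h12).
- move=> t a b; move: b; rewrite ltnS leq_eqVlt => /orP [/eqP -> |b].
    exact: ltnW.
  by apply: HA; rewrite ?ets.
- by move=> t a b; rewrite ltnNge a in b.
Qed.

Lemma bigmin_le_idx (r : seq nat) (F : nat -> nat) idx :
  \big[minn/idx]_(i <- r) F i <= idx.
Proof.
apply: (big_rec (fun m => m <= idx)) => // i m _ hm.
exact: leq_trans (geq_minr _ _) hm.
Qed.

Lemma bigmin_le_elem (r : seq nat) (F : nat -> nat) idx i :
  i \in r -> \big[minn/idx]_(j <- r) F j <= F i.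
Proof.
elim: r => // a r IH; rewrite in_cons big_cons => /orP [/eqP ->|hi].
  exact: geq_minl.
exact: leq_trans (geq_minr _ _) (IH hi).
Qed.

Lemma nat_cap (h : nat -> nat) t1
  (Hi : forall t, t1 <= t -> h t.+1 <= (h t).+1)
  (Hii : forall t, t1 <= t -> h t < t -> h t.+1 <= h t)
  (Hiii : forall t, t1 <= t -> h t <= t) t2 : t1 <= t2 ->
  cap_unimodal h t1 t2 /\
  \big[minn/h t1]_(t1 <= t < t2.+1) h t = minn (h t1) (h t2).
Proof.
move=> h12; have [ts [/andP [h1 h2] HA HB]] := @find_ts h t1 Hi Hii Hiii t2 h12.
have up := @chain_up h _ _ HA.
have down := @chain_down h _ _ HB.
split.
  right; right; exists ts; first by rewrite h1 h2.
  split => a b ha hab hb; [exact: up|exact: down].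
apply/eqP; rewrite eqn_leq; apply/andP; split.
  rewrite leq_min bigmin_le_idx /=; apply: bigmin_le_elem.
  by rewrite mem_index_iota h12 ltnS leqnn.
rewrite big_seq; apply: (big_ind (fun m => minn (h t1) (h t2) <= m)).
- exact: geq_minl.
- by move=> a b ha hb; rewrite leq_min ha hb.
- move=> t; rewrite mem_index_iota ltnS => /andP [a b].
  case: (leqP t ts) => hts.
    exact: leq_trans (geq_minl _ _) (up _ _ (leqnn _) a hts).
  exact: leq_trans (geq_minr _ _) (down _ _ (ltnW hts) b (leqnn _)).
Qed.

Lemma nat_max (h : nat -> nat) t1
  (Hi : forall t, t1 <= t -> h t.+1 <= (h t).+1) t2 : t1 <= t2 ->
  \max_(t1 <= t < t2.+1) h t <= t2 - t1 + h t1.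
Proof.
move=> h12.
have grow : forall t, t1 <= t -> h t <= t - t1 + h t1.
  elim=> [|t IH] ht.
    by move: ht; rewrite leqn0 => /eqP ->.
  move: ht; rewrite leq_eqVlt ltnS => /orP [/eqP <-|ht].
    by rewrite subnn.
  have := Hi _ ht; have := IH ht; lia.
apply/bigmax_leqP_seq => t; rewrite mem_index_iota ltnS => /andP [a b] _.
apply: leq_trans (grow _ a) _; rewrite leq_add2r; exact: leq_sub2r.
Qed.
Set Implicit Arguments. Unset Strict Implicit.
Local Open Scope ring_scope.

Lemma dom_sorted (R : realFieldType) (s u : seq R) a :
  sorted <=%R s -> sorted <=%R u -> perm_eq u (a :: s) ->
  forall j, (j < size s)%N -> nth 0 s j <= nth 0 u j.+1.
Proof.
move=> ss su pu j hj.
have szu : size u = (size s).+1 by rewrite (perm_size pu).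
rewrite leNgt; apply/negP => hlt.
set v := nth 0 u j.+1 in hlt.
pose p := fun y : R => y <= v.
have c1 : (j.+2 <= count p u)%N.
  rewrite -(cat_take_drop j.+2 u) count_cat.
  apply: leq_trans (leq_addr _ _).
  have hall : all p (take j.+2 u).
    apply/allP => y /(nthP 0) [i hi <-].
    rewrite size_takel ?szu // in hi.
    rewrite nth_take //; rewrite /p /v.
    apply: (sorted_leq_nth le_trans lexx 0 su); rewrite ?inE ?szu //.
    by apply: leq_trans hi _; rewrite ltnS.
  move: hall; rewrite all_count => /eqP ->.
  by rewrite size_takel ?szu.
have c2 : (count p s <= j)%N.
  rewrite -(cat_take_drop j s) count_cat.
  have -> : count p (drop j s) = 0%N.
    apply/eqP; rewrite -leqn0 leqNgt -has_count; apply/hasPn => y /(nthP 0) [i hi <-].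
    rewrite size_drop in hi.
    rewrite nth_drop /p -ltNge; apply: lt_le_trans hlt _.
    apply: (sorted_leq_nth le_trans lexx 0 ss); rewrite ?inE //.
      by rewrite -ltn_subRL.
    by rewrite leq_addr.
  rewrite addn0; apply: leq_trans (count_size _ _) _.
  by rewrite size_take; case: ifP => // /negbT; rewrite -leqNgt.
move: c1; rewrite ((permP pu) p) /= => c1.
have : (j.+2 <= 1 + j)%N.
  by apply: leq_trans c1 _; apply: leq_add (leq_b1 _) c2.
by rewrite add1n ltnn.
Qed.

Lemma size_ostat (R : realFieldType) (x : nat -> R) t : size (ostat t x) = t.
Proof. by rewrite /ostat size_sort size_map size_iota. Qed.

Lemma sorted_ostat (R : realFieldType) (x : nat -> R) t : sorted <=%R (ostat t x).
Proof. apply: sort_sorted => a b; exact: le_total. Qed.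

Lemma perm_ostat (R : realFieldType) (x : nat -> R) t :
  perm_eq (ostat t.+1 x) (x t.+1 :: ostat t x).
Proof.
rewrite /ostat; have -> : iota 1 t.+1 = iota 1 t ++ [:: t.+1] by move: (iotaD 1 t 1); rewrite addn1 add1n.
rewrite /ostat perm_sort map_cat /= cats1 perm_rcons perm_cons.
by rewrite perm_sym perm_sort perm_refl.
Qed.

Lemma ostat_ge0 (R : realFieldType) (x : nat -> R)
  (hx : forall k : nat, (1 <= k)%N -> 0 <= x k) t j : 0 <= nth 0 (ostat t x) j.
Proof.
case: (ltnP j (size (ostat t x))) => hj; last by rewrite nth_default.
have := mem_nth 0 hj; rewrite mem_sort => /mapP [k]; rewrite mem_iota => /andP [h1 _] ->.
exact: hx.
Qed.

Definition T {R : realFieldType} (x : nat -> R) t k :=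
  \sum_(t - k <= j < t) nth 0 (ostat t x) j.

Lemma Tmono (R : realFieldType) (x : nat -> R)
  (hx : forall k : nat, (1 <= k)%N -> 0 <= x k) t k k' :
  (k <= k')%N -> T x t k <= T x t k'.
Proof.
move=> hk; rewrite /T [in X in _ <= X](big_cat_nat _ (n := t - k)) /=.
- by rewrite lerDr sumr_ge0 // => i _; apply: ostat_ge0.
- by rewrite leq_sub2l.
- by rewrite leq_subr.
Qed.

Lemma Tstep (R : realFieldType) (x : nat -> R)
  (hx : forall k : nat, (1 <= k)%N -> 0 <= x k) t k :
  (k <= t)%N -> T x t k <= T x t.+1 k.
Proof.
move=> hk; rewrite /T subSn // -addn1 big_addn subn1 /=.
apply: ler_sum_nat => i /andP [_ hi].
rewrite addn1; apply: dom_sorted; rewrite ?size_ostat //.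
- exact: sorted_ostat.
- exact: sorted_ostat.
- exact: perm_ostat.
Qed.

Lemma T1 (R : realFieldType) (x : nat -> R) t : (1 <= t)%N ->
  T x t 1 = nth 0 (ostat t x) t.-1.
Proof. by case: t => // t _; rewrite /T subn1 /= big_nat1. Qed.

Lemma M_le (R : realFieldType) (x : nat -> R) t s : (Mcount t x s <= t)%N.
Proof.
rewrite /Mcount; case: eqP => // _; case: ifP => // _.
apply/bigmax_leqP_seq => i; rewrite mem_index_iota => /andP [_ hi] _.
by rewrite -ltnS.
Qed.

Lemma M_ge (R : realFieldType) (x : nat -> R)
  (hx : forall k : nat, (1 <= k)%N -> 0 <= x k) t s k :
  (1 <= k)%N -> (k <= t)%N -> T x t k <= s -> (k <= Mcount t x s)%N.
Proof.
move=> h1 hk hT; have ht : (1 <= t)%N by apply: leq_trans hk.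
rewrite /Mcount; case: eqP => [ht0|_]; first by rewrite ht0 in ht.
have -> : (s < nth 0 (ostat t x) t.-1) = false.
  apply/negbTE; rewrite -leNgt -T1 //; apply: le_trans hT; exact: Tmono.
apply: (leq_bigmax_seq (F := fun k => k)) => //.
by rewrite mem_index_iota h1 ltnS.
Qed.

Lemma M_sat (R : realFieldType) (x : nat -> R) t s :
  (1 <= Mcount t x s)%N -> T x t (Mcount t x s) <= s.
Proof.
rewrite /Mcount; case: eqP => // _; case: ifP => // _.
rewrite big_seq_cond.
elim/big_ind: _ => //.
- move=> a b ha hb h; case: (leqP a b) => hab.
  + by rewrite (maxn_idPr hab) in h *; exact: hb.
  + by rewrite (maxn_idPl (ltnW hab)) in h *; exact: ha.
- by move=> i /andP [].
Qed.

Lemma M_char (R : realFieldType) (x : nat -> R)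
  (hx : forall k : nat, (1 <= k)%N -> 0 <= x k) t s k :
  (1 <= k)%N -> (k <= Mcount t x s)%N -> T x t k <= s.
Proof.
move=> h1 hk; have hM : (1 <= Mcount t x s)%N by apply: leq_trans hk.
apply: le_trans (M_sat hM); exact: Tmono.
Qed.

Lemma M_succ (R : realFieldType) (x : nat -> R)
  (hx : forall k : nat, (1 <= k)%N -> 0 <= x k) t s :
  (Mcount t.+1 x s <= (Mcount t x s).+1)%N.
Proof.
case E: (Mcount t.+1 x s) => [|[|K]] //.
have hK : (K.+2 <= t.+1)%N by rewrite -E M_le.
rewrite ltnS; apply: M_ge => //.
apply: le_trans (Tstep hx _) _; first by rewrite -ltnS.
apply: le_trans (Tmono hx _ (leqnSn _)) _.
by rewrite -E; apply: M_sat; rewrite E.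
Qed.

Lemma M_dec (R : realFieldType) (x : nat -> R)
  (hx : forall k : nat, (1 <= k)%N -> 0 <= x k) t s :
  (Mcount t x s < t)%N -> (Mcount t.+1 x s <= Mcount t x s)%N.
Proof.
move=> hlt; rewrite leqNgt; apply/negP => hgt.
have : ((Mcount t x s).+1 <= Mcount t x s)%N.
  apply: M_ge => //; apply: le_trans (Tstep hx hlt) _.
  exact: M_char.
by rewrite ltnn.
Qed.
Theorem mainTheorem1 (R : realFieldType) (x : nat -> R)
    (hx : forall k : nat, (1 <= k)%N -> 0 <= x k) :
  (* (1) monotonicity in s *)
  (forall (t : nat) (s1 s2 : R), (1 <= t)%N -> 0 <= s1 -> s1 <= s2 ->
     (Mcount t x s1 <= Mcount t x s2)%N) /\
  (* (2) cap-unimodality in t, and the minimum is attained at an endpoint *)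
  (forall (s : R) (t1 t2 : nat), 0 <= s -> (1 <= t1)%N -> (t1 <= t2)%N ->
     cap_unimodal (fun t => Mcount t x s) t1 t2 /\
     \big[minn/Mcount t1 x s]_(t1 <= t < t2.+1) Mcount t x s
       = minn (Mcount t1 x s) (Mcount t2 x s)) /\
  (* (3) bound on the maximum *)
  (forall (s : R) (t1 t2 : nat), 0 <= s -> (1 <= t1)%N -> (t1 <= t2)%N ->
     (\max_(t1 <= t < t2.+1) Mcount t x s <= t2 - t1 + Mcount t1 x s)%N).
Proof.
split; [|split].
- move=> t s1 s2 ht hs1 h12.
  case E: (Mcount t x s1) => [//|K].
  rewrite -E; apply: M_ge => //; first by rewrite E.
    exact: M_le.
  apply: le_trans h12; apply: M_sat; by rewrite E.
- move=> s t1 t2 hs ht1 h12.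
  apply: (@nat_cap (fun t => Mcount t x s) t1) => //.
  + by move=> t _; apply: M_succ.
  + by move=> t _; apply: M_dec.
  + by move=> t _; apply: M_le.
- move=> s t1 t2 hs ht1 h12.
  apply: (@nat_max (fun t => Mcount t x s) t1) => //.
  by move=> t _; apply: M_succ.
Qed.
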